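(* Let $d\ge3$ and let $\mathbf z_1,\dots,\mathbf z_d\in\mathbb Z^d$ be a basis of $\mathbb Z^d$. Suppose $|\underline{\mathbf z_3}|\geq|\underline{\mathbf z_1}|$ and $\det\underline\Lambda_{2,d-1}>3|\underline{\mathbf z_2}|\det\underline\Lambda_{2,d-2}$. Then $\mathfrak S_2\subset\operatorname{int}\mathfrak S_1$ and $R_2<R_1/3$.
   Context: $|\cdot|$ is the Euclidean norm. For $\mathbf x=(x_1,\dots,x_d)\in\mathbb R^d$ write $\underline{\mathbf x}=(x_1,\dots,x_{d-1})$. Let $\pi_d=\{\mathbf x\in\mathbb R^d:x_d=1\}$. For given vectors $\mathbf z_1,\mathbf z_2,\dots$: $\det\underline\Lambda_{k,l}=|\underline{\mathbf z_k}\wedge\dots\wedge\underline{\mathbf z_{k+l-1}}|$ ($1\le l\le d-1$); $R_k=1/(2|\underline{\mathbf z_{k+1}}|\det\underline\Lambda_{k,d-1})$; when $\underline{\mathbf z_k},\dots,\underline{\mathbf z_{k+d-2}}$ are linearly independent, $\boldsymbol\alpha_k$ is the unique point of $\pi_d$ orthogonal to $\mathbf z_k,\dots,\mathbf z_{k+d-2}$ and $\mathfrak S_k=\{\mathbf x\in\pi_d:|\mathbf x-\boldsymbol\alpha_k|\le R_k\}$, a closed ball in $\pi_d$ whose interior is taken relative to $\pi_d$. Whenever $\boldsymbol\alpha_k$ or $\mathfrak S_k$ appears it is implicitly assumed well defined. *)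

(* Defs.v *)
From HB Require Import structures.
From mathcomp Require Import all_boot all_order all_algebra.
From mathcomp Require Import reals.
Set Implicit Arguments. Unset Strict Implicit. Unset Printing Implicit Defensive.
Import Order.TTheory GRing.Theory Num.Theory.
Local Open Scope ring_scope.

Section Defs.
Variable R : realType.

Definition enorm n (v : 'rV[R]_n) : R := Num.sqrt (\sum_(i < n) v 0 i ^+ 2).

Definition under d (x : 'rV[R]_d) : 'rV[R]_(d.-1) :=
  \row_(i < d.-1) x 0 (widen_ord (leq_pred d) i).

(* x lies in pi_d, i.e. x_d = 1 (the coordinate of index d-1 in 0-based 'I_d) *)
Definition in_pi d (x : 'rV[R]_d) : Prop :=
  forall i : 'I_d, val i = d.-1 -> x 0 i = 1.

(* Gram matrix and norm of a wedge product |v_1 /\ ... /\ v_l| = sqrt(det Gram) *)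
Definition gram n l (v : 'I_l -> 'rV[R]_n) : 'M[R]_l :=
  \matrix_(i, j) (v i *m (v j)^T) 0 0.
Definition wedge_norm n l (v : 'I_l -> 'rV[R]_n) : R := Num.sqrt (\det (gram v)).

(* z_k as a real vector; the family is indexed by nat, z 1, ..., z d meaningful *)
Definition zr d (z : nat -> 'rV[int]_d) (k : nat) : 'rV[R]_d := map_mx intr (z k).

(* det underline Lambda_{k,l} = |underline z_k /\ ... /\ underline z_{k+l-1}| *)
Definition detL d (z : nat -> 'rV[int]_d) (k l : nat) : R :=
  wedge_norm (fun i : 'I_l => under (zr z (k + i))).

Definition Rk d (z : nat -> 'rV[int]_d) (k : nat) : R :=
  1 / (2 * enorm (under (zr z k.+1)) * detL z k d.-1).

Definition under_indep d (z : nat -> 'rV[int]_d) (k : nat) : Prop :=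
  row_free (\matrix_(i < d.-1, j < d.-1) under (zr z (k + i)) 0 j).

(* a is "the" point alpha_k : a in pi_d and a orthogonal to z_k,...,z_{k+d-2}
   (unique when under_indep z k holds) *)
Definition is_alpha d (z : nat -> 'rV[int]_d) (k : nat) (a : 'rV[R]_d) : Prop :=
  in_pi a /\ forall i : 'I_d.-1, (a *m (zr z (k + i))^T) 0 0 = 0.

End Defs.

Definition basisZ d (z : nat -> 'rV[int]_d) : Prop :=
  forall v : 'rV[int]_d, exists! c : 'rV[int]_d,
    v = \sum_(i < d) c 0 i *: z i.+1.

(* Main.v *)
Require Import Defs.
From HB Require Import structures.
From mathcomp Require Import all_boot all_order all_algebra.
From mathcomp Require Import reals.
From mathcomp Require Import ring lra zify.
Import Order.TTheory GRing.Theory Num.Theory.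
Local Open Scope ring_scope.

Lemma cs_ineq (R : realFieldType) n (a b : 'I_n -> R) :
  (\sum_i a i * b i) ^+ 2 <= (\sum_i a i ^+ 2) * (\sum_i b i ^+ 2).
Proof.
set A := \sum_i a i ^+ 2; set B := \sum_i b i ^+ 2; set C := \sum_i a i * b i.
have B0 : 0 <= B by rewrite sumr_ge0 // => i _; rewrite sqr_ge0.
have key : \sum_i (B * a i - C * b i) ^+ 2 = B * (A * B - C ^+ 2).
  transitivity (\sum_i (B ^+ 2 * a i ^+ 2 + (- (2 * B * C)) * (a i * b i) + C ^+ 2 * b i ^+ 2)).
    by apply: eq_bigr => i _; ring.
  rewrite !big_split /= -!mulr_sumr -/A -/B -/C; ring.
have K0 : 0 <= B * (A * B - C ^+ 2).
  by rewrite -key sumr_ge0 // => i _; rewrite sqr_ge0.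
have [Bz|Bp] := eqVneq B 0.
  have bz : forall i, b i = 0.
    move=> i; apply/eqP; rewrite -sqrf_eq0; apply/eqP.
    by apply: (psumr_eq0P (P := predT) (F := fun i => b i ^+ 2)) => // j _; rewrite sqr_ge0.
  have -> : C = 0 by rewrite /C big1 // => i _; rewrite bz mulr0.
  by rewrite Bz expr0n /= mulr0.
have Bpos : 0 < B by rewrite lt0r Bp.
by rewrite pmulr_rge0 // subr_ge0 in K0.
Qed.

Lemma enorm_tri (R : realType) n (a b : 'rV[R]_n) :
  enorm (a + b) <= enorm a + enorm b.
Proof.
rewrite /enorm.
set sa := \sum_i a 0 i ^+ 2; set sb := \sum_i b 0 i ^+ 2.
have sa0 : 0 <= sa by rewrite sumr_ge0 // => i _; rewrite sqr_ge0.
have sb0 : 0 <= sb by rewrite sumr_ge0 // => i _; rewrite sqr_ge0.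
have -> : \sum_i (a + b) 0 i ^+ 2 = sa + 2 * (\sum_i a 0 i * b 0 i) + sb.
  transitivity (\sum_i (a 0 i ^+ 2 + 2 * (a 0 i * b 0 i) + b 0 i ^+ 2)).
    by apply: eq_bigr => i _; rewrite mxE; ring.
  by rewrite !big_split /= -mulr_sumr.
have cs := @cs_ineq _ _ (fun i => a 0 i) (fun i => b 0 i).
rewrite -/sa -/sb /= in cs.
set c := \sum_i a 0 i * b 0 i in cs *.
have hc : c <= Num.sqrt sa * Num.sqrt sb.
  rewrite -sqrtrM // (le_trans (ler_norm c)) // -sqrtr_sqr ler_sqrt //.
  by rewrite mulr_ge0.
rewrite -[_ + _ in X in _ <= X]ger0_norm ?addr_ge0 ?sqrtr_ge0 //.
rewrite -sqrtr_sqr ler_sqrt ?sqr_ge0 //.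
rewrite sqrrD !sqr_sqrtr //.
lra.
Qed.

Lemma det_col0 (R : comPzRingType) n (M : 'M[R]_n.+1) :
  (forall i, i != 0 -> M i 0 = 0) -> \det M = M 0 0 * \det (row' 0 (col' 0 M)).
Proof.
move=> H; rewrite (expand_det_col M 0) (bigD1 0) //= big1 ?addr0.
  by rewrite /cofactor addn0 expr0 mul1r.
by move=> i /H ->; rewrite mul0r.
Qed.

Set Implicit Arguments. Unset Strict Implicit.

Definition sq (R : pzRingType) n (v : 'rV[R]_n) := \sum_i v 0 i ^+ 2.
Definition u0 (R : fieldType) m (A : 'M[R]_m.+1) : 'rV[R]_m.+1 := \row_j invmx A j 0.

Lemma sq_ge0 (R : realFieldType) n (v : 'rV[R]_n) : 0 <= sq v.
Proof. by rewrite sumr_ge0 // => i _; rewrite sqr_ge0. Qed.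

Lemma lift0_ne0 n (i : 'I_n) : (lift ord0 i == ord0) = false.
Proof. by rewrite eq_sym (negbTE (neq_lift _ _)). Qed.

Lemma Au0 (R : fieldType) m (A : 'M[R]_m.+1) : A \in unitmx ->
  forall i, \sum_j A i j * u0 A 0 j = (i == 0)%:R.
Proof.
move=> Au i; have := congr1 (fun M : 'M_m.+1 => M i 0) (mulmxV Au).
by rewrite !mxE => <-; apply: eq_bigr => j _; rewrite mxE.
Qed.

Lemma sq_u0_gt0 (R : realFieldType) m (A : 'M[R]_m.+1) : A \in unitmx ->
  1 <= sq (row 0 A) * sq (u0 A).
Proof.
move=> Au; have := @cs_ineq _ _ (fun j => A 0 j) (fun j => u0 A 0 j).
rewrite Au0 // eqxx expr1n /sq.
by congr (_ <= _ * _); apply: eq_bigr => j _; rewrite mxE.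
Qed.

Definition Ar (R : fieldType) m (A : 'M[R]_m.+1) : 'M[R]_m.+1 :=
  \matrix_(i, j) if i == 0 then u0 A 0 j else A i j.

Lemma det_Ar (R : fieldType) m (A : 'M[R]_m.+1) : A \in unitmx ->
  \det (Ar A) = sq (u0 A) * \det A.
Proof.
move=> Au.
have H : \det (Ar A *m invmx A) = sq (u0 A).
  rewrite det_col0.
    have -> : row' 0 (col' 0 (Ar A *m invmx A)) = 1%:M.
      apply/matrixP => i j; rewrite !mxE.
      have := congr1 (fun M : 'M_m.+1 => M (lift 0 i) (lift 0 j)) (mulmxV Au).
      rewrite !mxE (inj_eq lift_inj) => <-.
      by apply: eq_bigr => l _; rewrite !mxE lift0_ne0.
    rewrite det1 mulr1 !mxE /sq; apply: eq_bigr => l _; by rewrite !mxE eqxx expr2.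
  move=> i i0; rewrite !mxE.
  transitivity ((A *m invmx A) i 0); last by rewrite mulmxV // mxE (negbTE i0) mulr0n.
  by rewrite mxE; apply: eq_bigr => l _; rewrite !mxE (negbTE i0).
move: H; rewrite det_mulmx det_inv => <-.
have : \det A != 0 by rewrite -unitfE -unitmxE.
by move=> nz; rewrite -mulrA mulVf // mulr1.
Qed.

Lemma sq_u0_pos (R : realFieldType) m (A : 'M[R]_m.+1) : A \in unitmx ->
  0 < sq (u0 A).
Proof.
move=> Au; rewrite lt_neqAle sq_ge0 andbT.
by apply/eqP => h; move: (sq_u0_gt0 Au); rewrite -h mulr0 ler10.
Qed.

Lemma gram_sub (R : realFieldType) m (A : 'M[R]_m.+1) : A \in unitmx ->
  \det (row' 0 (col' 0 (A *m A^T))) = sq (u0 A) * \det A ^+ 2.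
Proof.
move=> Au; have pos := sq_u0_pos Au.
have H : \det (Ar A *m (Ar A)^T) = sq (u0 A) * \det (row' 0 (col' 0 (A *m A^T))).
  rewrite det_col0.
    congr (_ * _).
      rewrite !mxE /sq; apply: eq_bigr => l _; rewrite !mxE eqxx expr2 //.
    congr (\det _); apply/matrixP => i j; rewrite !mxE; apply: eq_bigr => l _.
    by rewrite !mxE !lift0_ne0.
  move=> i i0; rewrite !mxE.
  transitivity (\sum_j A i j * u0 A 0 j); last by rewrite Au0 // (negbTE i0).
  by apply: eq_bigr => l _; rewrite !mxE (negbTE i0) eqxx mulrC.
move: H; rewrite det_mulmx det_tr det_Ar // => H.
apply: (mulfI (lt0r_neq0 pos)); rewrite -H; ring.
Qed.

Lemma u_mult (R : fieldType) m (A : 'M[R]_m.+1) (u : 'rV[R]_m.+1) : A \in unitmx ->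
  (forall i, i != 0 -> \sum_j A i j * u 0 j = 0) ->
  u = (\sum_j A 0 j * u 0 j) *: u0 A.
Proof.
move=> Au H; set c := \sum_j A 0 j * u 0 j.
have E : A *m (u - c *: u0 A)^T = 0.
  apply/matrixP => i l; rewrite !mxE (ord1 l).
  transitivity (\sum_j A i j * u 0 j - c * \sum_j A i j * u0 A 0 j).
    rewrite mulr_sumr -sumrB; apply: eq_bigr => j _; rewrite !mxE; ring.
  rewrite Au0 //; have [->|i0] := eqVneq i 0; first by rewrite mulr1 subrr.
  by rewrite H // mulr0 subrr.
have : (u - c *: u0 A)^T = 0 by rewrite -(mulKmx Au (u - c *: u0 A)^T) E mulmx0.
by move/(congr1 trmx); rewrite trmxK trmx0 => /eqP; rewrite subr_eq0 => /eqP.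
Qed.

Lemma sqZ (R : comPzRingType) n (c : R) (v : 'rV[R]_n) : sq (c *: v) = c ^+ 2 * sq v.
Proof. by rewrite /sq mulr_sumr; apply: eq_bigr => i _; rewrite mxE exprMn. Qed.

Lemma row_pos (R : realFieldType) m (A : 'M[R]_m.+1) i : A \in unitmx ->
  0 < sq (row i A).
Proof.
move=> Au; have := @cs_ineq _ _ (fun j => A i j) (fun j => invmx A j i).
have -> : \sum_j A i j * invmx A j i = 1.
  transitivity ((A *m invmx A) i i); first by rewrite mxE.
  by rewrite mulmxV // mxE eqxx.
rewrite expr1n => h.
rewrite lt_neqAle sq_ge0 andbT; apply/eqP => h0; move: h.
have -> : \sum_i0 A i i0 ^+ 2 = 0.
  by transitivity (sq (row i A)); [apply: eq_bigr => j _; rewrite mxE | rewrite -h0].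
by rewrite mul0r ler10.
Qed.

Lemma wedge_sq (R : realType) n (v : 'I_n -> 'rV[R]_n) :
  wedge_norm v = `|\det (\matrix_(i, j) v i 0 j)|.
Proof.
rewrite /wedge_norm -sqrtr_sqr; congr Num.sqrt.
have -> : gram v = (\matrix_(i, j) v i 0 j) *m (\matrix_(i, j) v i 0 j)^T.
  by apply/matrixP => i j; rewrite !mxE; apply: eq_bigr => l _; rewrite !mxE.
by rewrite det_mulmx det_tr expr2.
Qed.

Lemma ge1_sq (R : realType) (r : R) : 0 <= r -> 1 <= r ^+ 2 -> 1 <= r.
Proof. move=> h1 h2; nra. Qed.

Lemma final_core (R : realType) (q n1 D1 D2 n2 n3 : R) :
  0 < q -> 0 < n2 -> 0 <= n1 -> 0 < D1 -> 0 < D2 -> 1 <= q * n1 -> n1 <= n3 ->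
  3 * n2 * (q * D1) < D2 ->
  q / D2 + 1 / (2 * n3 * D2) < 1 / (2 * n2 * D1) /\
  1 / (2 * n3 * D2) < 1 / (2 * n2 * D1) / 3.
Proof.
move=> q0 n20 n10 D10 D20 qn1 hn3 hD.
have n1p : 0 < n1 by nra.
have n3p : 0 < n3 by lra.
have hq3 : 1 <= q * n3 by nra.
have h1 : 0 <= n2 * D1 * (q * n3 - 1).
  by apply: mulr_ge0; [rewrite mulr_ge0 // ltW | rewrite subr_ge0].
have h2 : 3 * n2 * (q * D1) * n3 < D2 * n3 by rewrite ltr_pM2r.
split; rewrite -subr_gt0.
  have -> : 1 / (2 * n2 * D1) - (q / D2 + 1 / (2 * n3 * D2)) =
    (n3 * D2 - 2 * q * n2 * n3 * D1 - n2 * D1) / (2 * n2 * n3 * D1 * D2).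
    by field; rewrite !lt0r_neq0.
  apply: divr_gt0; last by rewrite !mulr_gt0.
  nra.
have -> : 1 / (2 * n2 * D1) / 3 - 1 / (2 * n3 * D2) =
    (n3 * D2 - 3 * n2 * D1) / (6 * n2 * n3 * D1 * D2).
  by field; rewrite !lt0r_neq0.
apply: divr_gt0; last by rewrite !mulr_gt0.
nra.
Qed.

Lemma final (R : realType) (DA DB s t n1sq n2 n3 : R) :
  0 < s -> 0 < n2 -> 0 <= n1sq -> `|t| * `|DB| = 1 -> 1 <= n1sq * s ->
  Num.sqrt n1sq <= n3 -> 3 * n2 * Num.sqrt (s * DA ^+ 2) < `|DB| -> DA != 0 ->
  Num.sqrt (t ^+ 2 * s) + 1 / (2 * n3 * `|DB|) < 1 / (2 * n2 * `|DA|) /\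
  1 / (2 * n3 * `|DB|) < 1 / (2 * n2 * `|DA|) / 3.
Proof.
move=> s0 n20 n10 htD hs hn3 hD DA0.
have q0 : 0 < Num.sqrt s by rewrite sqrtr_gt0.
have D1 : 0 < `|DA| by rewrite normr_gt0.
have D20 : `|DB| != 0 by apply/eqP => h; move: htD; rewrite h mulr0 => /eqP; rewrite eq_sym oner_eq0.
have D2 : 0 < `|DB| by rewrite lt0r D20 normr_ge0.
have hg : Num.sqrt (s * DA ^+ 2) = Num.sqrt s * `|DA| by rewrite sqrtrM ?sqrtr_sqr // ltW.
have ht : `|t| = 1 / `|DB| by rewrite -htD mulfK.
have hdist : Num.sqrt (t ^+ 2 * s) = Num.sqrt s / `|DB|.
  by rewrite sqrtrM ?sqr_ge0 // sqrtr_sqr ht; field.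
have qn1 : 1 <= Num.sqrt s * Num.sqrt n1sq.
  rewrite -sqrtrM; last exact: ltW.
  apply: ge1_sq; first exact: sqrtr_ge0.
  rewrite sqr_sqrtr; first by rewrite mulrC.
  by rewrite mulr_ge0 // ltW.
rewrite hg in hD; rewrite hdist.
apply: (@final_core R (Num.sqrt s) (Num.sqrt n1sq)) => //; exact: sqrtr_ge0.
Qed.

Lemma unimod (R : realType) n (z : nat -> 'rV[int]_n) : basisZ z ->
  `|\det (\matrix_(i < n, j < n) zr R z i.+1 0 j)| = 1.
Proof.
move=> hz.
have /fin_all_exists [c hc] : forall j : 'I_n, exists c : 'rV[int]_n,
    delta_mx 0 j = \sum_i c 0 i *: z i.+1.
  by move=> j; have [c [hc _]] := hz (delta_mx 0 j); exists c.
set Zi := \matrix_(i < n, j < n) z i.+1 0 j.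
set C := \matrix_(j < n, i < n) c j 0 i.
have CZ : C *m Zi = 1%:M.
  apply/matrixP => j l; rewrite !mxE eq_sym.
  have := congr1 (fun M : 'rV[int]_n => M 0 l) (hc j).
  rewrite !mxE eqxx /= summxE => ->.
  by apply: eq_bigr => i _; rewrite !mxE.
have dd : (\det C * \det Zi = 1)%R by rewrite -det_mulmx CZ det1.
have : `|\det Zi|%N = 1%N.
  by have := congr1 absz dd; rewrite abszM => /eqP; rewrite muln_eq1 => /andP[_ /eqP].
move=> hZ.
have -> : \matrix_(i < n, j < n) zr R z i.+1 0 j = map_mx intr Zi.
  by apply/matrixP => i j; rewrite !mxE.
by rewrite det_map_mx -intr_norm -abszE hZ.
Qed.

Lemma dotE (R : comPzRingType) n (a w : 'rV[R]_n) :
  (a *m w^T) 0 0 = \sum_l a 0 l * w 0 l.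
Proof. by rewrite mxE; apply: eq_bigr => l _; rewrite mxE. Qed.

Lemma widenE n (j : 'I_n) : widen_ord (leq_pred n.+1) j = widen_ord (leqnSn n) j.
Proof. exact: val_inj. Qed.

Lemma dot_under (R : realType) n (a b w : 'rV[R]_n.+1) :
  a 0 ord_max = b 0 ord_max ->
  \sum_(j < n) under w 0 j * under (a - b) 0 j =
  \sum_l a 0 l * w 0 l - \sum_l b 0 l * w 0 l.
Proof.
move=> hab; rewrite !big_ord_recr /= hab.
transitivity (\sum_(j < n) a 0 (widen_ord (leqnSn n) j) * w 0 (widen_ord (leqnSn n) j)
   - \sum_(j < n) b 0 (widen_ord (leqnSn n) j) * w 0 (widen_ord (leqnSn n) j)).
  rewrite -sumrB; apply: eq_bigr => j _; rewrite !mxE /= !widenE; ring.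
ring.
Qed.

Lemma enorm_under (R : realType) n (v : 'rV[R]_n.+1) :
  v 0 ord_max = 0 -> enorm v = Num.sqrt (sq (under v)).
Proof.
move=> h; rewrite /enorm /sq big_ord_recr /= h expr0n /= addr0.
by congr Num.sqrt; apply: eq_bigr => j _; rewrite mxE widenE.
Qed.

Unset Implicit Arguments. Set Strict Implicit.

Theorem lemma6 (R : realType) (d : nat) (z : nat -> 'rV[int]_d)
  (a1 a2 : 'rV[R]_d) :
  (3 <= d)%N ->
  basisZ z ->
  under_indep R z 1 -> under_indep R z 2 ->
  is_alpha z 1 a1 -> is_alpha z 2 a2 ->
  enorm (under (zr R z 3)) >= enorm (under (zr R z 1)) ->
  detL R z 2 d.-1 > 3 * enorm (under (zr R z 2)) * detL R z 2 d.-2 ->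
  (forall x : 'rV[R]_d, in_pi x -> enorm (x - a2) <= Rk R z 2 ->
      enorm (x - a1) < Rk R z 1)
  /\ Rk R z 2 < Rk R z 1 / 3.
Proof.
case: d z a1 a2 => [|[|[|k]]] z a1 a2 hd //.
move=> hz hi1 hi2 [pa1 oa1] [pa2 oa2] hn31 hD.
have m1 : a1 0 ord_max = 1 by apply: pa1.
have m2 : a2 0 ord_max = 1 by apply: pa2.
have h1 : forall n, (0 < n)%N -> (n <= k.+2)%N -> \sum_l a1 0 l * zr R z n 0 l = 0.
  move=> n n0 nk; have hi : (n.-1 < k.+2)%N by lia.
  have := oa1 (Ordinal hi); rewrite dotE /=.
  by have -> : (1 + n.-1 = n)%N by lia.
have h2 : forall n, (1 < n)%N -> (n <= k.+3)%N -> \sum_l a2 0 l * zr R z n 0 l = 0.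
  move=> n n0 nk; have hi : (n.-2 < k.+2)%N by lia.
  have := oa2 (Ordinal hi); rewrite dotE /=.
  by have -> : (2 + n.-2 = n)%N by lia.
set A := \matrix_(i < k.+2, j < k.+2) under (zr R z (1 + i)) 0 j.
set B := \matrix_(i < k.+2, j < k.+2) under (zr R z (2 + i)) 0 j.
have Au : A \in unitmx by rewrite -row_free_unit; exact: hi1.
set t := \sum_l a2 0 l * zr R z 1 0 l.
have tB : `|t| * `|\det B| = 1.
  set Z := \matrix_(i < k.+3, j < k.+3) zr R z i.+1 0 j.
  have hZ : `|\det Z| = 1 by apply: unimod.
  have E := congr1 (fun M : 'cV[R]_(k.+3) => M ord_max 0)
     (congr1 (mulmx^~ a2^T) (mul_adj_mx Z)).
  rewrite /= -mulmxA mul_scalar_mx !mxE m2 mulr1 in E.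
  rewrite (bigD1 0) //= big1 ?addr0 in E; last first.
    move=> j j0; rewrite !mxE.
    have jp : (0 < j)%N by case: j j0 => [[|jj] ?].
    have jl := ltn_ord j.
    have -> : \sum_j1 (Z j j1 * a2^T j1 0) = \sum_l a2 0 l * zr R z j.+1 0 l.
      by apply: eq_bigr => l _; rewrite !mxE mulrC.
    by rewrite h2 ?mulr0 //; lia.
  have Zt : (Z *m a2^T) 0 0 = t.
    by rewrite mxE; apply: eq_bigr => l _; rewrite !mxE mulrC.
  have ZB : row' 0 (col' ord_max Z) = B.
    apply/matrixP => i j; rewrite !mxE lift0.
    by congr (intr (z _ 0 _)); apply: val_inj; exact: lift_max.
  have hadj : `|(\adj Z) ord_max 0| = `|\det B|.
    by rewrite mxE /cofactor ZB normrM normrX normrN1 expr1n mul1r.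
  move: E => /(congr1 Num.norm).
  by rewrite normrM hadj Zt hZ mulrC.
set u := under (a2 - a1).
have hAu : forall i, \sum_j A i j * u 0 j =
    \sum_l a2 0 l * zr R z (1 + i) 0 l - \sum_l a1 0 l * zr R z (1 + i) 0 l.
  move=> i; rewrite -dot_under ?m1 ?m2 //; apply: eq_bigr => j _.
  by rewrite [A i j]mxE.
have uE : u = t *: u0 A.
  have -> : t = \sum_j A 0 j * u 0 j by rewrite hAu (h1 1) // subr0.
  apply: u_mult Au _ => i i0.
  have ip : (0 < i)%N by case: i i0 => [[|jj] ?].
  have il := ltn_ord i.
  rewrite hAu h1 ?h2 ?subrr //; lia.
have dist : enorm (a2 - a1) = Num.sqrt (t ^+ 2 * sq (u0 A)).
  by rewrite enorm_under ?mxE ?m1 ?m2 ?subrr // -/u uE sqZ.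
have hD1 : detL R z 1 (k.+3).-1 = `|\det A| by rewrite /detL wedge_sq.
have hD2 : detL R z 2 (k.+3).-1 = `|\det B| by rewrite /detL wedge_sq.
have hG : detL R z 2 (k.+3).-2 = Num.sqrt (sq (u0 A) * \det A ^+ 2).
  rewrite -gram_sub // /detL /wedge_norm; congr (Num.sqrt (\det _)).
  apply/matrixP => i j; rewrite !mxE; apply: eq_bigr => l _; rewrite !mxE lift0.
  by [].
have hn1 : enorm (under (zr R z 1)) = Num.sqrt (sq (row 0 A)).
  by rewrite /enorm /sq; congr Num.sqrt; apply: eq_bigr => j _; rewrite !mxE.
have hn2 : 0 < enorm (under (zr R z 2)).
  have := row_pos (Ordinal (isT : (1 < k.+2)%N)) Au.
  rewrite /enorm sqrtr_gt0 /sq => h; apply: (lt_le_trans h); rewrite le_eqVlt; apply/orP; left.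
  by apply/eqP; apply: eq_bigr => j _; rewrite !mxE.
have DA0 : \det A != 0 by rewrite -unitfE -unitmxE.
have hn3' : Num.sqrt (sq (row 0 A)) <= enorm (under (zr R z 3)) by rewrite -hn1.
have hD' : 3 * enorm (under (zr R z 2)) * Num.sqrt (sq (u0 A) * \det A ^+ 2) < `|\det B|.
  by rewrite -hG -hD2.
have [F1 F2] := @final R (\det A) (\det B) (sq (u0 A)) t (sq (row 0 A))
   (enorm (under (zr R z 2))) (enorm (under (zr R z 3)))
   (sq_u0_pos Au) hn2 (sq_ge0 _) tB (sq_u0_gt0 Au) hn3' hD' DA0.
rewrite /Rk hD1 hD2; split => //.
move=> x _ hx.
have -> : x - a1 = (x - a2) + (a2 - a1) by rewrite addrA subrK.
have T := @enorm_tri R _ (x - a2) (a2 - a1).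
rewrite dist in T; apply: (le_lt_trans T); apply: le_lt_trans F1.
by rewrite addrC lerD2l.
Qed.
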